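(* Let $n\ge1$, $z\in I_n$, and assume (H2)$_j(z)$ and (H3)$_j(z)$ for all $1\le j\le n$. Then for every $1\le j\le n$ and every $k\in[-\pi,\pi]^d$ with $a(k)\le\gamma j^{-1}\log j$, $$|f_j(k;z)|\le e^{CK_3\beta}\,e^{-(1-C(K_2+K_3)\beta)\,j\,a(k)},$$ where $C$ is a positive constant depending only on $d,\gamma,\delta,\rho$ (not on $K_1,\dots,K_5$, $k$, $j$, $n$, or $\beta$), valid for $\beta$ sufficiently small (depending on the $K_i$).
   Context: Let $d>4$, $L\ge1$, $\beta=L^{-d}$; fix $\gamma,\delta,\rho>0$ with $0<\frac{d-4}{2}-\rho<\gamma<\gamma+\delta<1\wedge\frac{d-4}{2}$. Let $D\ge0$ on $\mathbb Z^d$ with $\sum_xD(x)=1$, $\hat D(k)=\sum_xD(x)e^{ik\cdot x}$, $a(k)=1-\hat D(k)$, $\sigma^2=-\nabla^2\hat D(0)$. For $z>0$, $k\in[-\pi,\pi]^d$ let $f_n(k;z)$ ($n\ge0$, $f_0=1$), $g_n(k;z)$ ($n\ge1$) be complex numbers, and $v_0(z)=1$, $v_n(z)=b_n/(1+c_n)$ with $b_n=-\sigma^{-2}\sum_{m=1}^n\nabla^2g_m(0;z)$, $c_n=\sum_{m=1}^n(m-1)g_m(0;z)$. Let $z_0=z_1=1$, $z_{n+1}=1-\sum_{m=2}^{n+1}g_m(0;z_n)$, and given constants $K_1,\dots,K_5>0$, $I_n=[z_n-K_1\beta n^{-(d-2)/2},z_n+K_1\beta n^{-(d-2)/2}]$.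 (H2)$_j(z)$: $|v_j(z)-v_{j-1}(z)|\le K_2\beta j^{-(d-2)/2}$. (H3)$_j(z)$: for all $k$ with $a(k)\le\gamma j^{-1}\log j$, $f_j(k;z)=\prod_{i=1}^j[1-v_i(z)a(k)+r_i(k)]$ for some numbers $r_i(k)=r_i(k;z)$ with $|r_i(0)|\le K_3\beta i^{-(d-2)/2}$ and $|r_i(k)-r_i(0)|\le K_3\beta a(k)i^{-\delta}$. *)

(* Defs.v *)
From mathcomp Require Import all_boot all_order all_algebra.
From mathcomp Require Import all_classical all_reals all_analysis.
From mathcomp Require Export complex.
Set Implicit Arguments. Unset Strict Implicit. Unset Printing Implicit Defensive.
Import Order.TTheory GRing.Theory Num.Theory.
Import numFieldNormedType.Exports.
Local Open Scope ring_scope.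
Local Open Scope classical_set_scope.
Local Open Scope complex_scope.

Section Defs.
Variable R : realType.
Variable d : nat.

(* Points of Z^d are functions 'I_d -> int; k in R^d is a row vector. *)

(* the box [-N,N]^d, enumerated by {ffun 'I_d -> 'I_(2N+1)} *)
Definition box_pt (N : nat) (y : {ffun 'I_d -> 'I_(N.*2.+1)}) : 'I_d -> int :=
  fun i => (nat_of_ord (y i))%:Z - N%:Z.

Definition boxsum (N : nat) (F : ('I_d -> int) -> R) : R :=
  \sum_(y : {ffun 'I_d -> 'I_(N.*2.+1)}) F (box_pt y).

Definition dotk (k : 'rV[R]_d) (x : 'I_d -> int) : R :=
  \sum_(i < d) k 0 i * (x i)%:~R.

(* D >= 0 and sum_{x in Z^d} D(x) = 1 (sum over Z^d = limit of box sums) *)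
Definition step_distr (D : ('I_d -> int) -> R) : Prop :=
  (forall x, 0 <= D x) /\ (fun N => boxsum N D) @ \oo --> (1 : R).

(* \hat D(k) = sum_x D(x) e^{i k.x} = sum_x D(x) cos(k.x) + i sum_x D(x) sin(k.x) *)
Definition Dhat (D : ('I_d -> int) -> R) (k : 'rV[R]_d) : R[i] :=
  (limn (fun N => boxsum N (fun x => D x * cos (dotk k x))))
  +i* (limn (fun N => boxsum N (fun x => D x * sin (dotk k x)))).

Definition afun (D : ('I_d -> int) -> R) (k : 'rV[R]_d) : R[i] := 1 - Dhat D k.

Definition in_torus (k : 'rV[R]_d) : Prop := forall i, - pi <= k 0 i <= pi.

Definition lap0 (F : 'rV[R]_d -> R[i]) : R[i] :=
  (\sum_(i < d) derive1n 2 (fun t : R => complex.Re (F (t *: delta_mx 0 i))) 0)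
  +i* (\sum_(i < d) derive1n 2 (fun t : R => complex.Im (F (t *: delta_mx 0 i))) 0).

Definition sigma2 (D : ('I_d -> int) -> R) : R[i] := - lap0 (Dhat D).

Section Seq.
Variables (D : ('I_d -> int) -> R) (g : nat -> 'rV[R]_d -> R -> R[i]).

Definition bseq (z : R) (n : nat) : R[i] :=
  - (sigma2 D)^-1 * \sum_(1 <= m < n.+1) lap0 (fun k => g m k z).

Definition cseq (z : R) (n : nat) : R[i] :=
  \sum_(1 <= m < n.+1) (m.-1)%:R * g m 0 z.

Definition vseq (z : R) (n : nat) : R[i] :=
  if n == 0%N then 1 else bseq z n / (1 + cseq z n).

Fixpoint zseq (n : nat) : R :=
  match n with
  | 0 => 1
  | p.+1 => 1 - \sum_(2 <= m < p.+2) complex.Re (g m 0 (zseq p))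
  end.

Definition decay (n : nat) : R := (n%:R) `^ (- ((d%:R - 2) / 2)).

Definition in_In (beta K1 : R) (n : nat) (z : R) : Prop :=
  zseq n - K1 * beta * decay n <= z <= zseq n + K1 * beta * decay n.

Definition hypH2 (beta K2 : R) (j : nat) (z : R) : Prop :=
  `|vseq z j - vseq z j.-1| <= (K2 * beta * decay j)%:C.

Definition hypH3 (f : nat -> 'rV[R]_d -> R -> R[i]) (gam del beta K3 : R)
    (j : nat) (z : R) : Prop :=
  exists r : nat -> 'rV[R]_d -> R[i],
    forall k : 'rV[R]_d, in_torus k ->
      afun D k <= (gam * (j%:R)^-1 * ln (j%:R))%:C ->
      f j k z = \prod_(1 <= i < j.+1) (1 - vseq z i * afun D k + r i k) /\
      (forall i : nat, (1 <= i <= j)%N ->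
         `|r i 0| <= (K3 * beta * decay i)%:C /\
         `|r i k - r i 0| <= (K3 * beta)%:C * afun D k * ((i%:R) `^ (- del))%:C).
End Seq.
End Defs.

(* Main.v *)
Require Import Defs.
From mathcomp Require Import all_boot all_order all_algebra.
From mathcomp Require Import all_classical all_reals all_analysis.
From mathcomp Require Import complex.
From mathcomp Require Import ring lra.
Import Order.TTheory GRing.Theory Num.Theory.
Import numFieldNormedType.Exports.
Local Open Scope ring_scope.
Local Open Scope complex_scope.

Lemma decay_le (R : realType) (d i : nat) : (4 < d)%N -> (1 <= i)%N ->
  decay R d i <= (i%:R * Num.sqrt (i%:R : R))^-1.
Proof.
move=> d4 i1; rewrite /decay.
have i1R : (1 : R) <= i%:R by rewrite ler1n.
have d5 : (5 : R) <= d%:R by rewrite ler_nat.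
apply: (@le_trans _ _ ((i%:R : R) `^ (- (1 + 2^-1)))).
  apply: ler_powR => //; lra.
rewrite powRN powRD; last by apply/implyP => _; lra.
by rewrite powRr1 ?powR12_sqrt // (le_trans _ i1R).
Qed.

Lemma sum_sqrt_le (R : realType) (j : nat) : (1 <= j)%N ->
  \sum_(1 <= i < j.+1) ((i%:R : R) * Num.sqrt (i%:R))^-1 <= 3 - 2 / Num.sqrt (j%:R).
Proof.
elim: j => [//|j IH] _.
case: j IH => [|j] IH.
  by rewrite big_nat1 sqrtr1 mul1r invr1; lra.
rewrite big_nat_recr //=.
have := IH isT.
set a := Num.sqrt (j.+1%:R : R).
set b := Num.sqrt (j.+2%:R : R).
have a0 : 0 < a by rewrite sqrtr_gt0 ltr0n.
have b0 : 0 < b by rewrite sqrtr_gt0 ltr0n.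
have ha : a ^+ 2 = j.+1%:R by rewrite sqr_sqrtr // ler0n.
have hb : b ^+ 2 = j.+2%:R by rewrite sqr_sqrtr // ler0n.
have hab : b ^+ 2 = a ^+ 2 + 1 by rewrite ha hb -natr1.
rewrite -hb -exprSr.
suff : (b ^+ 3)^-1 <= 2 / a - 2 / b by lra.
have key : 0 <= 2 * b ^+ 3 - 2 * a * b ^+ 2 - a.
  have ab : a <= b by nra.
  nra.
suff : 0 <= 2 / a - 2 / b - (b ^+ 3)^-1 by lra.
have -> : 2 / a - 2 / b - (b ^+ 3)^-1 = (2 * b ^+ 3 - 2 * a * b ^+ 2 - a) / (a * b ^+ 3).
  by field; rewrite ?gt_eqF ?exprn_gt0 //.
by rewrite divr_ge0 // mulr_ge0 // ?exprn_ge0 // ltW.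
Qed.

Lemma sum_decay_le (R : realType) (d j : nat) : (4 < d)%N ->
  \sum_(1 <= i < j.+1) decay R d i <= 3.
Proof.
move=> d4; case: j => [|j]; first by rewrite big_geq.
apply: (le_trans (y := \sum_(1 <= i < j.+2) ((i%:R : R) * Num.sqrt (i%:R))^-1)).
  rewrite big_nat_cond [X in _ <= X]big_nat_cond.
  apply: ler_sum => i /andP[/andP[i1 _] _]; exact: decay_le.
apply: le_trans (@sum_sqrt_le R j.+1 isT) _.
have : 0 <= 2 / Num.sqrt (j.+1%:R : R) by rewrite divr_ge0 ?sqrtr_ge0.
lra.
Qed.

Lemma vbound (R : realType) (d : nat) D (g : nat -> 'rV[R]_d -> R -> R[i])
   (beta K2 z : R) (n : nat) :
  (forall j, (1 <= j <= n)%N -> hypH2 D g beta K2 j z) ->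
  forall i, (i <= n)%N ->
  `|vseq D g z i - 1| <= (K2 * beta * \sum_(1 <= m < i.+1) decay R d m)%:C.
Proof.
move=> H2; elim => [|i IH] iN.
  by rewrite /vseq /= subrr normr0 big_geq // mulr0.
have := H2 i.+1 iN; rewrite /hypH2 /= => h.
rewrite big_nat_recr //= mulrDr rmorphD.
apply: (le_trans (y := `|vseq D g z i.+1 - vseq D g z i| + `|vseq D g z i - 1|)).
  by apply: le_trans (ler_normD _ _); rewrite addrA subrK.
rewrite addrC; apply: lerD => //; apply: IH; exact: ltnW.
Qed.

Lemma factor_bound (R : realType) (A v r0 rk : R[i]) (a c2 c3 e di : R) :
  A = a%:C -> 0 <= a <= 1 -> `|v - 1| <= c2%:C -> `|r0| <= e%:C ->
  `|rk - r0| <= c3%:C * A * di%:C -> 0 <= c3 -> di <= 1 ->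
  `|1 - v * A + rk| <= (expR (- (1 - c2 - c3) * a + e))%:C.
Proof.
move=> -> /andP[a0 a1] hv hr0 hrk c30 di1.
have -> : 1 - v * a%:C + rk = (1 - a)%:C - (v - 1) * a%:C + r0 + (rk - r0).
  by rewrite rmorphB rmorph1; ring.
apply: le_trans (ler_normD _ _) _.
apply: le_trans (lerD (ler_normD _ _) (lexx _)) _.
apply: le_trans (lerD (lerD (ler_normD _ _) (lexx _)) (lexx _)) _.
rewrite normrN normrM (ger0_norm (x := (1 - a)%:C)) ?ler0c ?subr_ge0 //.
rewrite (ger0_norm (x := a%:C)) ?ler0c //.
have h1 : `|v - 1| * a%:C <= (c2 * a)%:C.
  by rewrite rmorphM ler_wpM2r ?ler0c.
have h2 : `|rk - r0| <= (c3 * a)%:C.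
  apply: le_trans hrk _; rewrite -!rmorphM lecR.
  by rewrite ler_piMr // mulr_ge0.
apply: le_trans (lerD (lerD (lerD (lexx _) h1) hr0) h2) _.
rewrite -!rmorphD lecR.
apply: le_trans (expR_ge1Dx _); lra.
Qed.

Theorem lemma2p2 (R : realType) (d : nat) (gam del rho : R) :
  (4 < d)%N -> 0 < gam -> 0 < del -> 0 < rho ->
  0 < (d%:R - 4) / 2 - rho -> (d%:R - 4) / 2 - rho < gam ->
  gam + del < Num.min 1 ((d%:R - 4) / 2) ->
  exists C : R, 0 < C /\
  forall K1 K2 K3 K4 K5 : R,
    0 < K1 -> 0 < K2 -> 0 < K3 -> 0 < K4 -> 0 < K5 ->
  exists beta0 : R, 0 < beta0 /\
  forall L : R, 1 <= L -> L `^ (- d%:R) <= beta0 ->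
  let beta := L `^ (- d%:R) in
  forall (D : ('I_d -> int) -> R) (f g : nat -> 'rV[R]_d -> R -> R[i]),
    step_distr D ->
  forall (n : nat) (z : R),
    (1 <= n)%N -> 0 < z -> in_In g beta K1 n z ->
    (forall j : nat, (1 <= j <= n)%N ->
       hypH2 D g beta K2 j z /\ hypH3 D g f gam del beta K3 j z) ->
  forall (j : nat) (k : 'rV[R]_d),
    (1 <= j <= n)%N -> in_torus k ->
    afun D k <= (gam * (j%:R)^-1 * ln (j%:R))%:C ->
    `|f j k z| <= (expR (C * K3 * beta)
                   * expR (- (1 - C * (K2 + K3) * beta) * j%:R
                           * complex.Re (afun D k)))%:C.
Proof.
move=> d4 gam0 del0 rho0 _ _ hgd.
have gam1 : gam < 1.
  by move: hgd; rewrite lt_min => /andP[+ _]; lra.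
exists 3; split => // K1 K2 K3 K4 K5 K10 K20 K30 _ _.
exists 1; split => // L L1 _ beta D f g _ n z _ _ _ Hyp j k /andP[j1 jn] kt Ha.
have b0 : 0 < beta by rewrite /beta powR_gt0 // (lt_le_trans ltr01 L1).
have [_ [r Hr]] := Hyp j (introT andP (conj j1 jn)).
have [Hf Hri] := Hr k kt Ha.
have [_ Hr1] := Hri 1%N j1.
have A0 : 0 <= afun D k.
  have := le_trans (normr_ge0 _) Hr1.
  rewrite powR1 rmorph1 mulr1 pmulr_rge0 // ltcR mulr_gt0 //.
have hA : afun D k = (complex.Re (afun D k))%:C by rewrite RRe_real // ger0_real.
set a := complex.Re (afun D k).
have a0 : 0 <= a by rewrite -ler0c -hA.
have j1R : (1 : R) <= j%:R by rewrite ler1n.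
have a1 : a <= 1.
  move: Ha; rewrite hA lecR => Ha; apply: le_trans Ha _.
  have lnj : ln (j%:R : R) <= j%:R.
    have h := @le_ln1Dx R (j%:R - 1).
    have e : 1 + (j%:R - 1) = (j%:R : R) by ring.
    rewrite e in h; have := h ltac:(lra); lra.
  have lnj0 : 0 <= ln (j%:R : R) by rewrite ln_ge0.
  have : (j%:R : R)^-1 * ln j%:R <= 1.
    rewrite ler_pdivrMl; last lra.
    by rewrite mulr1.
  have : 0 <= (j%:R : R)^-1 * ln j%:R by rewrite mulr_ge0 // invr_ge0; lra.
  rewrite -mulrA; nra.
have Hv : forall i, (i <= n)%N -> `|vseq D g z i - 1| <= (3 * K2 * beta)%:C.
  move=> i iN; apply: le_trans (@vbound R d D g beta K2 z n _ i iN) _.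
    by move=> m /Hyp [].
  rewrite lecR; have := sum_decay_le R d i d4; have : 0 <= K2 * beta by rewrite mulr_ge0 // ltW.
  nra.
rewrite Hf normr_prod.
apply: (@le_trans _ _ (\prod_(1 <= i < j.+1)
   (expR (- (1 - 3 * K2 * beta - K3 * beta) * a + K3 * beta * decay R d i))%:C)).
  rewrite big_nat_cond [X in _ <= X]big_nat_cond.
  apply: ler_prod => i /andP[/andP[i1 ij] _]; rewrite normr_ge0 /=.
  have ijn : (1 <= i <= j)%N by rewrite i1 -ltnS.
  have [hr0 hrk] := Hri i ijn.
  apply: factor_bound hA _ _ hr0 hrk _ _.
  - by rewrite a0 a1.
  - apply: Hv; apply: leq_trans jn; by case/andP: ijn.
  - by rewrite mulr_ge0 // ltW.
  - rewrite -[X in _ <= X](powRr0 (i%:R : R)).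
    by apply: ler_powR; [rewrite ler1n | lra].
rewrite -rmorph_prod lecR -expR_sum -expRD ler_expR.
rewrite big_split /= sumr_const_nat subn1 /=.
rewrite -mulr_natr -mulr_sumr.
have hs := sum_decay_le R d j d4.
have hk : 0 <= K3 * beta by rewrite mulr_ge0 // ltW.
have hj : 0 <= (j%:R : R) * a by rewrite mulr_ge0.
have e1 : K3 * beta * (\sum_(1 <= i < j.+1) decay R d i) <= K3 * beta * 3.
  by rewrite ler_wpM2l.
have e2 : 0 <= K3 * beta * ((j%:R : R) * a) by rewrite mulr_ge0.
nra.
Qed.
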